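(* Let $\mathcal{M}=(l;\mathcal{V})$ and $\mathcal{M}'=(l';\mathcal{V})$ be semi-parametric models over $\Omega$ with $\mathcal{M}\sim\mathcal{M}'$, and for $\gamma>0$ consider the families $\mathcal{M}(\gamma)=(\gamma l;\mathcal{V})$ and $\mathcal{M}'(\gamma)=(\gamma l';\mathcal{V})$. Then for any data $\mathbf{y}$ (observed at measurement locations $\mathcal{X}$) and noise variance $\sigma^2$, the values of the leave-one-out squared-error criterion, the leave-one-out negative log-likelihood criterion and the SURE criterion are the same for $\mathcal{M}(\gamma)$ and $\mathcal{M}'(\gamma)$, for every $\gamma$. Consequently, if $\gamma^\star$ is an optimal value of the criterion for the family $\mathcal{M}(\gamma)$, it is an optimal value for $\mathcal{M}'(\gamma)$, and the selected models $\mathcal{M}(\gamma^\star)$ and $\mathcal{M}'(\gamma^\star)$ are prediction-equivalent.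
   Context: SPM: a pair $(l;\mathcal{V})$, $\mathcal{V}=\{v_1,\ldots,v_m\}$ linearly independent functions on $\Omega$, $l$ symmetric and conditionally positive semi-definite w.r.t. $\mathcal{V}$ (for every finite $\mathcal{X}$ unisolvent for $\mathcal{V}$, i.e. with basis matrix $\mathbf{V}=[v_j(x_i)]$ of full column rank, $\widetilde{\mathbf{L}}=(\mathbf{I}-\mathbf{Q}\mathbf{Q}^\top)\mathbf{L}(\mathbf{I}-\mathbf{Q}\mathbf{Q}^\top)\succeq0$ where $\mathbf{Q}$ is an orthonormal basis of $\mathrm{span}\,\mathbf{V}$ and $\mathbf{L}=[l(x_i,x_j)]$). Predictive mean and variance at $x$ given observations $\mathbf{y}$ at unisolvent $\mathcal{X}$ with noise variance $\sigma^2$: $\mathbb{E}(f(x)\mid\mathbf{y})=(\mathbf{l}_{x,\mathcal{X}}\ \mathbf{v}_x)\mathbf{S}^{-1}\binom{\mathbf{y}}{\mathbf{0}}$, $\mathrm{Var}(f(x)\mid\mathbf{y})=l(x,x)-(\mathbf{l}_{x,\mathcal{X}}\ \mathbf{v}_x)\mathbf{S}^{-1}\binom{\mathbf{l}_{x,\mathcal{X}}^\top}{\mathbf{v}_x^\top}$, $\mathbf{S}=\begin{pmatrix}\mathbf{L}+\sigma^2\mathbf{I}&\mathbf{V}\\ \mathbf{V}^\top&\mathbf{0}\end{pmatrix}$. Smoother matrix: $\mathbf{M}=\mathbf{Q}\mathbf{Q}^\top+\widetilde{\mathbf{L}}(\widetilde{\mathbf{L}}+\sigma^2\mathbf{I})^{-1}$.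 $\mathcal{M}\sim\mathcal{M}'$ means $|\mathcal{V}|=|\mathcal{V}'|$ and equal predictive means and variances for every finite unisolvent $\mathcal{X}$, all $x,\mathbf{y},\sigma^2>0$. Selection criteria (for $n$ observations $y_i$ at $x_i$, with $\mathbf{y}_{-i}$ the data without the $i$-th observation): LOO squared error $C_{\mathrm{loo\text{-}mse}}=\frac1n\sum_i\big(y_i-\mathbb{E}(f(x_i)\mid\mathbf{y}_{-i})\big)^2$; LOO negative log-likelihood $C_{\mathrm{loo\text{-}nll}}=\frac1n\sum_i\big\{\frac12\log(2\pi\,\mathrm{Var}(y_i\mid\mathbf{y}_{-i}))+\frac{(y_i-\mathbb{E}(y_i\mid\mathbf{y}_{-i}))^2}{2\mathrm{Var}(y_i\mid\mathbf{y}_{-i})}\big\}$, where $y_i\mid\mathbf{y}_{-i}$ is Gaussian with mean $\mathbb{E}(f(x_i)\mid\mathbf{y}_{-i})$ and variance $\mathrm{Var}(f(x_i)\mid\mathbf{y}_{-i})+\sigma^2$; SURE $C_{\mathrm{SURE}}=-\sigma^2+\frac1n\sum_i(y_i-(\mathbf{M}\mathbf{y})_i)^2+\frac{2\sigma^2}{n}\mathrm{Tr}\,\mathbf{M}$. *)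

(* Defs.v *)
From HB Require Import structures.
From mathcomp Require Import all_boot all_order all_algebra.
From mathcomp Require Import reals exp trigo.
Set Implicit Arguments. Unset Strict Implicit. Unset Printing Implicit Defensive.
Import Order.TTheory GRing.Theory Num.Theory.
Local Open Scope ring_scope.

Section SPM.
Variables (R : realType) (Omega : Type) (m : nat).
Variable v : 'I_m -> Omega -> R.

Definition lin_indep : Prop :=
  forall c : 'I_m -> R, (forall x, \sum_(j < m) c j * v j x = 0) -> forall j, c j = 0.

Definition basis_mx n (xs : 'I_n -> Omega) : 'M[R]_(n, m) :=
  \matrix_(i, j) v j (xs i).

Definition unisolvent n (xs : 'I_n -> Omega) : Prop :=
  \rank (basis_mx xs) = m.

(* Q Q^T, the orthogonal projector onto span V (independent of the choice of
   the orthonormal basis Q; written out as V (V^T V)^{-1} V^T) *)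
Definition projV n (xs : 'I_n -> Omega) : 'M[R]_n :=
  basis_mx xs *m invmx ((basis_mx xs)^T *m basis_mx xs) *m (basis_mx xs)^T.

Definition kern_mx (l : Omega -> Omega -> R) n (xs : 'I_n -> Omega) : 'M[R]_n :=
  \matrix_(i, j) l (xs i) (xs j).

Definition Ltilde (l : Omega -> Omega -> R) n (xs : 'I_n -> Omega) : 'M[R]_n :=
  (1%:M - projV xs) *m kern_mx l xs *m (1%:M - projV xs).

Definition psd n (A : 'M[R]_n) : Prop :=
  forall u : 'cV[R]_n, 0 <= (u^T *m A *m u) 0 0.

Definition cond_psd (l : Omega -> Omega -> R) : Prop :=
  forall n (xs : 'I_n -> Omega), injective xs -> unisolvent xs -> psd (Ltilde l xs).

Definition SPM (l : Omega -> Omega -> R) : Prop :=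
  lin_indep /\ (forall x y, l x y = l y x) /\ cond_psd l.

Definition Smx (l : Omega -> Omega -> R) n (xs : 'I_n -> Omega) (s2 : R)
  : 'M[R]_(n + m) :=
  block_mx (kern_mx l xs + s2%:M) (basis_mx xs) (basis_mx xs)^T 0.

Definition kvec (l : Omega -> Omega -> R) n (xs : 'I_n -> Omega) (x : Omega)
  : 'rV[R]_(n + m) :=
  row_mx (\row_i l x (xs i)) (\row_j v j x).

Definition pmean (l : Omega -> Omega -> R) n (xs : 'I_n -> Omega) (s2 : R)
  (y : 'cV[R]_n) (x : Omega) : R :=
  (kvec l xs x *m invmx (Smx l xs s2) *m col_mx y 0) 0 0.

Definition pvar (l : Omega -> Omega -> R) n (xs : 'I_n -> Omega) (s2 : R)
  (x : Omega) : R :=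
  l x x - (kvec l xs x *m invmx (Smx l xs s2) *m (kvec l xs x)^T) 0 0.

(* M ~ M' (both with the same V, hence |V| = |V'|) *)
Definition pred_equiv (l l' : Omega -> Omega -> R) : Prop :=
  forall n (xs : 'I_n -> Omega), injective xs -> unisolvent xs ->
  forall (x : Omega) (y : 'cV[R]_n) (s2 : R), 0 < s2 ->
    pmean l xs s2 y x = pmean l' xs s2 y x /\ pvar l xs s2 x = pvar l' xs s2 x.

Definition kscale (g : R) (l : Omega -> Omega -> R) : Omega -> Omega -> R :=
  fun x x' => g * l x x'.

(* leave-one-out: the points / data without the i-th observation *)
Definition rem_idx n (i : 'I_n) (j : 'I_n.-1) : 'I_n := insubd i (bump i j).
Definition rem_pts n (xs : 'I_n -> Omega) (i : 'I_n) : 'I_n.-1 -> Omega :=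
  fun j => xs (rem_idx i j).
Definition rem_obs n (y : 'cV[R]_n) (i : 'I_n) : 'cV[R]_n.-1 :=
  \col_j y (rem_idx i j) 0.

Definition loo_mean (l : Omega -> Omega -> R) n (xs : 'I_n -> Omega) (s2 : R)
  (y : 'cV[R]_n) (i : 'I_n) : R :=
  pmean l (rem_pts xs i) s2 (rem_obs y i) (xs i).

(* Var(y_i | y_{-i}) = Var(f(x_i) | y_{-i}) + sigma^2 *)
Definition loo_var (l : Omega -> Omega -> R) n (xs : 'I_n -> Omega) (s2 : R)
  (i : 'I_n) : R :=
  pvar l (rem_pts xs i) s2 (xs i) + s2.

Definition C_loo_mse (l : Omega -> Omega -> R) n (xs : 'I_n -> Omega) (s2 : R)
  (y : 'cV[R]_n) : R :=
  n%:R^-1 * \sum_(i < n) (y i 0 - loo_mean l xs s2 y i) ^+ 2.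

Definition C_loo_nll (l : Omega -> Omega -> R) n (xs : 'I_n -> Omega) (s2 : R)
  (y : 'cV[R]_n) : R :=
  n%:R^-1 * \sum_(i < n)
    (2^-1 * ln (2 * pi * loo_var l xs s2 i)
     + (y i 0 - loo_mean l xs s2 y i) ^+ 2 / (2 * loo_var l xs s2 i)).

Definition smoother (l : Omega -> Omega -> R) n (xs : 'I_n -> Omega) (s2 : R)
  : 'M[R]_n :=
  projV xs + Ltilde l xs *m invmx (Ltilde l xs + s2%:M).

Definition C_SURE (l : Omega -> Omega -> R) n (xs : 'I_n -> Omega) (s2 : R)
  (y : 'cV[R]_n) : R :=
  - s2 + n%:R^-1 * \sum_(i < n) (y i 0 - (smoother l xs s2 *m y) i 0) ^+ 2
  + 2 * s2 / n%:R * \tr (smoother l xs s2).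

End SPM.

Definition crit_opt (R : realType) (C : R -> R) (g : R) : Prop :=
  0 < g /\ forall g', 0 < g' -> C g <= C g'.

(* Main.v *)
Require Import Defs.
From HB Require Import structures.
From mathcomp Require Import all_boot all_order all_algebra.
From mathcomp Require Import reals exp trigo.
From mathcomp Require Import zify.
Import Order.TTheory GRing.Theory Num.Theory.
Local Open Scope ring_scope.

Section Aux.
Set Implicit Arguments.
Variable R : realType.

Lemma inj_unit k (A : 'M[R]_k) :
  (forall u : 'rV_k, u *m A = 0 -> u = 0) -> A \in unitmx.
Proof.
move=> H; rewrite -row_free_unit -kermx_eq0; apply/eqP/row_matrixP => i.
rewrite row0; apply: H; apply/sub_kermxP; exact: row_sub.
Qed.

Lemma sqn_ge0 k (a : 'rV[R]_k) : 0 <= (a *m a^T) 0 0.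
Proof.
rewrite mxE; apply: sumr_ge0 => j _; rewrite mxE -expr2; exact: sqr_ge0.
Qed.

Lemma sqn_eq0 k (a : 'rV[R]_k) : (a *m a^T) 0 0 = 0 -> a = 0.
Proof.
rewrite mxE => H; apply/rowP => j; rewrite mxE.
have Hp : forall i : 'I_k, predT i -> 0 <= a 0 i * a^T i 0.
  by move=> i _; rewrite mxE -expr2 sqr_ge0.
have := psumr_eq0P Hp H (i := j) isT.
rewrite mxE -expr2 => /eqP; rewrite sqrf_eq0 => /eqP.
by move=> ->.
Qed.

Lemma quad_pos k (A : 'M[R]_k) (a : 'rV[R]_k) t :
  0 <= (a *m A *m a^T) 0 0 -> 0 < t -> (a *m (A + t%:M) *m a^T) 0 0 = 0 -> a = 0.
Proof.
move=> HA Ht; rewrite mulmxDr mulmxDl mul_mx_scalar -scalemxAl.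
have H2 := sqn_ge0 a.
have E : forall (B C : 'M[R]_1), (B + t *: C) 0 0 = B 0 0 + t * C 0 0.
  by move=> B C; rewrite !mxE.
rewrite E => H; apply: sqn_eq0.
have : t * (a *m a^T) 0 0 = 0.
  apply/eqP; rewrite eq_le; apply/andP; split; last by rewrite mulr_ge0 // ltW.
  by rewrite -H lerDr.
by move/eqP; rewrite mulf_eq0 gt_eqF //= => /eqP.
Qed.
End Aux.

Section M.
Set Implicit Arguments.
Variables (R : realType) (Omega : Type) (m : nat) (v : 'I_m -> Omega -> R).

Lemma VT_inj n (xs : 'I_n -> Omega) : unisolvent v xs ->
  forall b : 'rV[R]_m, b *m (basis_mx v xs)^T = 0 -> b = 0.
Proof.
move=> U b Hb.
have rf : row_free (basis_mx v xs)^T by rewrite /row_free mxrank_tr U.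
apply: (row_free_inj rf); by rewrite Hb mul0mx.
Qed.

Lemma G_unit n (xs : 'I_n -> Omega) : unisolvent v xs ->
  ((basis_mx v xs)^T *m basis_mx v xs) \in unitmx.
Proof.
move=> U; apply: inj_unit => u Hu; apply: (VT_inj U); apply: sqn_eq0.
by rewrite trmx_mul trmxK !mulmxA -(mulmxA u) Hu mul0mx mxE.
Qed.

Lemma projV_l n (xs : 'I_n -> Omega) (a : 'rV[R]_n) :
  a *m basis_mx v xs = 0 -> a *m projV v xs = 0.
Proof. by move=> H; rewrite /projV !mulmxA H !mul0mx. Qed.

Lemma projV_r n (xs : 'I_n -> Omega) (a : 'rV[R]_n) :
  a *m basis_mx v xs = 0 -> projV v xs *m a^T = 0.
Proof.
by move=> H; rewrite /projV -!mulmxA -trmx_mul H trmx0 !mulmx0.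
Qed.

Lemma Lt_quad l n (xs : 'I_n -> Omega) (a : 'rV[R]_n) :
  a *m basis_mx v xs = 0 ->
  a *m Ltilde v l xs *m a^T = a *m kern_mx l xs *m a^T.
Proof.
move=> H.
have h1 : a *m (1%:M - projV v xs) = a by rewrite mulmxBr mulmx1 projV_l // subr0.
have h2 : (1%:M - projV v xs) *m a^T = a^T by rewrite mulmxBl mul1mx projV_r // subr0.
by rewrite /Ltilde !mulmxA h1 -(mulmxA _ _ a^T) h2.
Qed.

Lemma S_unit l n (xs : 'I_n -> Omega) t :
  psd (Ltilde v l xs) -> unisolvent v xs -> 0 < t -> Smx v l xs t \in unitmx.
Proof.
move=> Hp U Ht; apply: inj_unit => u.
rewrite -[u](@hsubmxK _ 1 n m).
move: (@lsubmx R 1 n m u) (@rsubmx R 1 n m u) => a b.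
rewrite /Smx mul_row_block mulmx0 addr0 -row_mx0.
move/eq_row_mx => [H1 H2].
have Ha : a = 0.
  apply: (@quad_pos R n (kern_mx l xs) a t _ Ht).
    by rewrite -Lt_quad //; have := Hp a^T; rewrite trmxK.
  have := congr1 (fun M => (M *m a^T) 0 0) H1 => /=.
  by rewrite mulmxDl -(mulmxA b) -trmx_mul H2 trmx0 mulmx0 addr0 mul0mx => ->; rewrite mxE.
rewrite Ha mul0mx add0r in H1.
by rewrite Ha (VT_inj U H1) row_mx0.
Qed.

Lemma Lts_unit l n (xs : 'I_n -> Omega) t :
  psd (Ltilde v l xs) -> 0 < t -> (Ltilde v l xs + t%:M) \in unitmx.
Proof.
move=> Hp Ht; apply: inj_unit => u Hu; apply: (@quad_pos R n (Ltilde v l xs) u t _ Ht).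
  by have := Hp u^T; rewrite trmxK.
by rewrite Hu mul0mx mxE.
Qed.

Definition Dg n (a b : R) : 'M[R]_(n + m) := block_mx a%:M 0 0 b%:M.

Lemma DgM n a b c d : Dg n a b *m Dg n c d = Dg n (a * c) (b * d).
Proof.
by rewrite /Dg mulmx_block !mulmx0 !mul0mx !addr0 !add0r -!scalar_mxM.
Qed.

Lemma Dgaa n a : Dg n a a = a%:M.
Proof. by rewrite /Dg -scalar_mx_block. Qed.

Lemma Dg_tr n a b : (Dg n a b)^T = Dg n a b.
Proof. by rewrite /Dg tr_block_mx !tr_scalar_mx !trmx0. Qed.

Lemma kern_scale (g : R) (l : Omega -> Omega -> R) n (xs : 'I_n -> Omega) :
  kern_mx (kscale g l) xs = g *: kern_mx l xs.
Proof. by apply/matrixP => i j; rewrite !mxE. Qed.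

Lemma S_scale (g : R) (l : Omega -> Omega -> R) n (xs : 'I_n -> Omega) s2 : 0 < g ->
  Smx v (kscale g l) xs s2 *m Dg n g^-1 1 = Dg n 1 g^-1 *m Smx v l xs (s2 / g).
Proof.
move=> Hg; have g0 : g != 0 by rewrite gt_eqF.
rewrite /Smx /Dg !mulmx_block !mulmx0 !mul0mx !addr0 !add0r !mulmx1 !mul1mx.
rewrite kern_scale mul_mx_scalar mul_scalar_mx scalerDr scalerA mulVf //.
rewrite scale1r scale_scalar_mx mulrC mul_mx_scalar.
by [].
Qed.

Lemma kvec_scale (g : R) (l : Omega -> Omega -> R) n (xs : 'I_n -> Omega) x :
  kvec v (kscale g l) xs x = kvec v l xs x *m Dg n g 1.
Proof.
rewrite /kvec /Dg mul_row_block !mulmx0 addr0 add0r mulmx1 mul_mx_scalar.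
by congr row_mx; apply/rowP => i; rewrite !mxE.
Qed.

Lemma invmx_eq k (A B : 'M[R]_k) : A *m B = 1%:M -> invmx A = B.
Proof.
move=> H; have [uA _] := mulmx1_unit H.
by rewrite -(mulKmx uA B) H mulmx1.
Qed.

Lemma invS_scale (g : R) (l : Omega -> Omega -> R) n (xs : 'I_n -> Omega) s2 : 0 < g ->
  Smx v l xs (s2 / g) \in unitmx ->
  invmx (Smx v (kscale g l) xs s2) =
  Dg n g^-1 1 *m invmx (Smx v l xs (s2 / g)) *m Dg n 1 g.
Proof.
move=> Hg U; apply: invmx_eq.
rewrite !mulmxA S_scale // -(mulmxA (Dg n 1 g^-1)) mulmxV // mulmx1 DgM.
by rewrite mulr1 mulVf ?gt_eqF // Dgaa.
Qed.

Lemma pm_scale (g : R) (l : Omega -> Omega -> R) n (xs : 'I_n -> Omega) s2 y x : 0 < g ->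
  Smx v l xs (s2 / g) \in unitmx ->
  pmean v (kscale g l) xs s2 y x = pmean v l xs (s2 / g) y x /\
  pvar v (kscale g l) xs s2 x = g * pvar v l xs (s2 / g) x.
Proof.
move=> Hg U; rewrite /pmean /pvar invS_scale // kvec_scale.
set W := invmx _; set k := kvec v l xs x.
have E1 : Dg n g 1 *m Dg n g^-1 1 = 1%:M.
  by rewrite DgM mulfV ?gt_eqF // mulr1 Dgaa.
have E2 : Dg n 1 g *m col_mx y 0 = col_mx y 0.
  by rewrite /Dg mul_block_col !mul0mx mulmx0 !addr0 mul1mx.
have E3 : Dg n 1 g *m (k *m Dg n g 1)^T = g *: k^T.
  by rewrite trmx_mul Dg_tr mulmxA DgM mul1r mulr1 Dgaa mul_scalar_mx.
split.
  by rewrite -!mulmxA E2 !mulmxA -(mulmxA k) E1 mulmx1.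
rewrite -!mulmxA E3 !mulmxA -(mulmxA k) E1 mulmx1 -scalemxAr mxE mulrBr.
by rewrite /kscale.
Qed.

Lemma smoother_mean (l : Omega -> Omega -> R) n (xs : 'I_n -> Omega) s2 y :
  psd (Ltilde v l xs) -> unisolvent v xs -> 0 < s2 ->
  smoother v l xs s2 *m y = \col_i pmean v l xs s2 y (xs i).
Proof.
move=> Hp U Hs.
have SU : Smx v l xs s2 \in unitmx by apply: S_unit.
have GU : ((basis_mx v xs)^T *m basis_mx v xs) \in unitmx by apply: G_unit.
have AU : (Ltilde v l xs + s2%:M) \in unitmx by apply: Lts_unit.
set z := invmx (Smx v l xs s2) *m col_mx y 0.
have Hz : Smx v l xs s2 *m z = col_mx y 0 by rewrite mulKVmx.
have Ez : z = col_mx (@usubmx R n m 1 z) (@dsubmx R n m 1 z) by rewrite vsubmxK.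
have Hm : \col_i pmean v l xs s2 y (xs i) = row_mx (kern_mx l xs) (basis_mx v xs) *m z.
  apply/colP => i; rewrite mxE /pmean -mulmxA -/z.
  have -> : kvec v l xs (xs i) = row i (row_mx (kern_mx l xs) (basis_mx v xs)).
    rewrite row_row_mx /kvec; congr row_mx; apply/rowP => j; rewrite !mxE //.
  by rewrite -row_mul mxE.
rewrite Hm; move: Hz; rewrite Ez; move: (usubmx z) (dsubmx z) => a b.
rewrite /Smx mul_block_col mul0mx addr0 mul_row_col => /eq_col_mx [H1 H2].
set V := basis_mx v xs in H1 H2 *; set L := kern_mx l xs in H1 *.
rewrite /smoother.
set P := projV v xs.
have PV : P *m V = V.
  by rewrite /P /projV -!mulmxA mulVmx // mulmx1.
have PP : P *m P = P.
  by rewrite {1}/P /projV !mulmxA PV.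
have Pa : P *m a = 0.
  by rewrite /P /projV -mulmxA H2 mulmx0.
have PiP : (1%:M - P) *m P = 0 by rewrite mulmxBl mul1mx PP subrr.
have PiV : (1%:M - P) *m V = 0 by rewrite mulmxBl mul1mx PV subrr.
have Pia : (1%:M - P) *m a = a by rewrite mulmxBl mul1mx Pa subr0.
have LtP : Ltilde v l xs *m P = 0 by rewrite /Ltilde -mulmxA PiP mulmx0.
set Lt := Ltilde v l xs in LtP AU *.
have Lta : Lt *m a = (1%:M - P) *m (L *m a).
  by rewrite /Lt /Ltilde -mulmxA Pia mulmxA.
have S1 : (Lt + s2%:M) *m a = (1%:M - P) *m y.
  rewrite [LHS]mulmxDl Lta -H1 mulmxDr (mulmxA _ V) PiV mul0mx addr0.
  by rewrite (mulmxDl L) mulmxDr !mul_scalar_mx -scalemxAr Pia.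
set A := Lt + s2%:M in AU S1 *.
have AP : A *m P = s2 *: P by rewrite /A mulmxDl LtP add0r mul_scalar_mx.
have iAP : invmx A *m P = s2^-1 *: P.
  have := congr1 (fun M => s2^-1 *: (invmx A *m M)) AP.
  by rewrite mulKmx // -scalemxAr scalerA mulVf ?gt_eqF // scale1r => <-.
have ydec : y = (1%:M - P) *m y + P *m y by rewrite mulmxBl mul1mx subrK.
have T1 : Lt *m invmx A *m P = 0.
  by rewrite -mulmxA iAP -scalemxAr LtP scaler0.
have T3 : Lt *m a = (1%:M - P) *m y - s2 *: a.
  by rewrite -S1 /A mulmxDl mul_scalar_mx addrK.
have T4 : L *m a + V *m b = y - s2 *: a.
  by rewrite -H1 mulmxDl mul_scalar_mx addrAC addrK.
rewrite T4 mulmxDl.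
have -> : Lt *m invmx A *m y = Lt *m a.
  rewrite {1}ydec mulmxDr (mulmxA _ P y) T1 mul0mx addr0 -S1.
  by rewrite mulmxA mulmxKV.
by rewrite T3 mulmxBl mul1mx addrA (addrC (P *m y)) subrK.
Qed.

Lemma psd_scale (g : R) (l : Omega -> Omega -> R) n (xs : 'I_n -> Omega) :
  0 < g -> psd (Ltilde v l xs) -> psd (Ltilde v (kscale g l) xs).
Proof.
move=> Hg Hp u; rewrite /Ltilde kern_scale -scalemxAr -scalemxAl.
rewrite -scalemxAr -scalemxAl mxE; apply: mulr_ge0; [exact: ltW | exact: Hp u].
Qed.

Lemma rem_inj n (xs : 'I_n -> Omega) (i : 'I_n) :
  injective xs -> injective (rem_pts xs i).
Proof.
move=> inj j k /inj /(congr1 val).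
have lt : forall j : 'I_n.-1, (bump i j < n)%N.
  move=> j'; have h1 : (bump i j' <= j'.+1)%N.
    by rewrite /bump; case: (i <= j')%N; rewrite ?add1n ?add0n.
  have h2 := ltn_ord j'; have h3 := ltn_ord i.
  move: h1 h2 h3; move: (bump i j') (nat_of_ord j') (nat_of_ord i) => b a c.
  lia.
rewrite /rem_idx !val_insubd !lt => /(congr1 (unbump i)); rewrite !bumpK.
exact: val_inj.
Qed.

Lemma pe_scale (g : R) (l l' : Omega -> Omega -> R) :
  SPM v l -> SPM v l' -> pred_equiv v l l' -> 0 < g ->
  pred_equiv v (kscale g l) (kscale g l').
Proof.
move=> [_ [_ Hl]] [_ [_ Hl']] Hpe Hg n xs inj U x y s2 Hs.
have Hs' : 0 < s2 / g by rewrite divr_gt0.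
have U1 : Smx v l xs (s2 / g) \in unitmx by apply: S_unit => //; apply: Hl.
have U2 : Smx v l' xs (s2 / g) \in unitmx by apply: S_unit => //; apply: Hl'.
have [E1 E2] := @pm_scale g l n xs s2 y x Hg U1.
have [E1' E2'] := @pm_scale g l' n xs s2 y x Hg U2.
have [F1 F2] := Hpe n xs inj U x y (s2 / g) Hs'.
by rewrite E1 E2 E1' E2' F1 F2.
Qed.

Lemma sm_eq (g : R) (l l' : Omega -> Omega -> R) n (xs : 'I_n -> Omega) s2 :
  SPM v l -> SPM v l' -> pred_equiv v l l' -> 0 < g ->
  injective xs -> unisolvent v xs -> 0 < s2 ->
  smoother v (kscale g l) xs s2 = smoother v (kscale g l') xs s2.
Proof.
move=> Hl Hl' Hpe Hg inj U Hs.
have pe := @pe_scale g l l' Hl Hl' Hpe Hg.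
case: Hl => [_ [_ Cl]]; case: Hl' => [_ [_ Cl']].
have H : forall y : 'cV[R]_n, smoother v (kscale g l) xs s2 *m y = smoother v (kscale g l') xs s2 *m y.
  move=> y.
  rewrite (@smoother_mean (kscale g l) n xs s2 y); first last; try done.
    by apply: psd_scale => //; apply: Cl.
  rewrite (@smoother_mean (kscale g l') n xs s2 y); first last; try done.
    by apply: psd_scale => //; apply: Cl'.
  apply/colP => i; rewrite mxE [RHS]mxE.
  by case: (pe n xs inj U (xs i) y s2 Hs).
apply/matrixP => i j.
have := congr1 (fun M : 'cV[R]_n => M i 0) (H (delta_mx j 0)).
rewrite -!colE mxE [X in _ = X -> _]mxE.
done.
Qed.

End M.

Theorem mainTheorem6 (R : realType) (Omega : Type) (m : nat)
  (v : 'I_m -> Omega -> R) (l l' : Omega -> Omega -> R) :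
  SPM v l -> SPM v l' -> pred_equiv v l l' ->
  forall (n : nat) (xs : 'I_n -> Omega) (y : 'cV[R]_n) (s2 : R),
  injective xs -> unisolvent v xs -> 0 < s2 ->
  (* SURE: equal values for every gamma, same optima, equivalent selections *)
  (forall g : R, 0 < g ->
     C_SURE v (kscale g l) xs s2 y = C_SURE v (kscale g l') xs s2 y) /\
  (forall gs : R, crit_opt (fun g => C_SURE v (kscale g l) xs s2 y) gs ->
     crit_opt (fun g => C_SURE v (kscale g l') xs s2 y) gs /\
     pred_equiv v (kscale gs l) (kscale gs l')) /\
  (* leave-one-out criteria (defined when every X without x_i is unisolvent) *)
  ((forall i : 'I_n, unisolvent v (rem_pts xs i)) ->
   (forall g : R, 0 < g ->
      C_loo_mse v (kscale g l) xs s2 y = C_loo_mse v (kscale g l') xs s2 y /\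
      C_loo_nll v (kscale g l) xs s2 y = C_loo_nll v (kscale g l') xs s2 y) /\
   (forall gs : R, crit_opt (fun g => C_loo_mse v (kscale g l) xs s2 y) gs ->
      crit_opt (fun g => C_loo_mse v (kscale g l') xs s2 y) gs /\
      pred_equiv v (kscale gs l) (kscale gs l')) /\
   (forall gs : R, crit_opt (fun g => C_loo_nll v (kscale g l) xs s2 y) gs ->
      crit_opt (fun g => C_loo_nll v (kscale g l') xs s2 y) gs /\
      pred_equiv v (kscale gs l) (kscale gs l'))).
Proof.
move=> Hl Hl' Hpe n xs y s2 inj U Hs.
have pe : forall g, 0 < g -> pred_equiv v (kscale g l) (kscale g l').
  by move=> g Hg; apply: pe_scale.
have sure : forall g : R, 0 < g ->
    C_SURE v (kscale g l) xs s2 y = C_SURE v (kscale g l') xs s2 y.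
  by move=> g Hg; rewrite /C_SURE (@sm_eq R Omega m v g l l' n xs s2 Hl Hl' Hpe Hg inj U Hs).
have opt : forall (C C' : R -> R), (forall g, 0 < g -> C g = C' g) ->
    forall gs, crit_opt C gs -> crit_opt C' gs /\ pred_equiv v (kscale gs l) (kscale gs l').
  move=> C C' E gs [Hgs Ho]; split; last exact: pe.
  by split => // g' Hg'; rewrite -!E //; apply: Ho.
split; first exact: sure.
split; first exact: opt.
move=> Urem.
have loo : forall g, 0 < g -> forall i : 'I_n,
    loo_mean v (kscale g l) xs s2 y i = loo_mean v (kscale g l') xs s2 y i /\
    loo_var v (kscale g l) xs s2 i = loo_var v (kscale g l') xs s2 i.
  move=> g Hg i.
  have ri : injective (rem_pts xs i) by apply: rem_inj.
  have [E1 E2] := pe g Hg n.-1 (rem_pts xs i) ri (Urem i) (xs i) (rem_obs y i) s2 Hs.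
  by rewrite /loo_mean /loo_var E1 E2.
have eqs : forall g, 0 < g ->
    C_loo_mse v (kscale g l) xs s2 y = C_loo_mse v (kscale g l') xs s2 y /\
    C_loo_nll v (kscale g l) xs s2 y = C_loo_nll v (kscale g l') xs s2 y.
  move=> g Hg; split; rewrite /C_loo_mse /C_loo_nll; congr (_ * _);
    apply: eq_bigr => i _; case: (loo g Hg i) => E1 E2; by rewrite E1 ?E2.
split; first exact: eqs.
split; apply: opt => g Hg; by case: (eqs g Hg).
Qed.
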